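(* Let $\mathcal C$ be an irredundant 3-SAT formula and let $u,v,w$ be distinct variables. Suppose there are distinct variables $a,b\notin\{u,v,w\}$ with $abu,abv,abw\in\mathcal C$. Then (a) $\bar u\bar v w\notin\mathcal C$; and (b) if $\bar u\bar v\bar w\in\mathcal C$, then there is no variable $c\notin\{u,v,w,a,b\}$ with $abc\in\mathcal C$.
   Context: A clause is a conjunction of three literals on three distinct variables, written as juxtaposition (e.g. $\bar u\bar v w=\bar u\wedge\bar v\wedge w$); a formula is a nonempty set of clauses. $\mathcal C$ is irredundant if every $C\in\mathcal C$ has a witness: an assignment satisfying $C$ and no other clause of $\mathcal C$. *)

(* Defs.v *)
From mathcomp Require Import all_boot.
Set Implicit Arguments. Unset Strict Implicit. Unset Printing Implicit Defensive.

(* A literal over variables V: (x, true) is x, (x, false) is \bar x. *)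
Definition lit (V : finType) := (V * bool)%type.

(* A clause: a set of exactly three literals on three distinct variables,
   read as their conjunction. *)
Definition is_clause (V : finType) (C : {set lit V}) : bool :=
  (#|C| == 3) && [forall l in C, forall l' in C, (l.1 == l'.1) ==> (l == l')].

Definition is_formula (V : finType) (F : {set {set lit V}}) : bool :=
  (F != set0) && [forall C in F, is_clause C].

Definition sat (V : finType) (f : V -> bool) (C : {set lit V}) : bool :=
  [forall l in C, f l.1 == l.2].

Definition irredundant (V : finType) (F : {set {set lit V}}) : Prop :=
  forall C, C \in F ->
    exists f : V -> bool, sat f C /\ (forall D, D \in F -> D != C -> ~~ sat f D).

Definition cl3 (V : finType) (x y z : lit V) : {set lit V} := [set x; y; z].

(* Main.v *)
Require Import Defs.
From mathcomp Require Import all_boot.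

Lemma satE (V : finType) (f : V -> bool) (x y z : lit V) :
  sat f (cl3 x y z) = [&& f x.1 == x.2, f y.1 == y.2 & f z.1 == z.2].
Proof.
apply/forall_inP/and3P.
- move=> H; split; apply: H; rewrite /cl3 !inE eqxx ?orbT //.
- case=> h1 h2 h3 l; rewrite /cl3 !inE => /orP[/orP[]|] /eqP -> //.
Qed.

Lemma neq_lit (V : finType) (l : lit V) (C D : {set lit V}) :
  l \in C -> l \notin D -> D != C.
Proof. by move=> h1 h2; apply/negP => /eqP E; rewrite E h1 in h2. Qed.

Lemma nsym {T : eqType} (x y : T) : x != y -> (y == x) = false.
Proof. by rewrite eq_sym => /negbTE. Qed.

Ltac ne l NE NE' := apply: (@neq_lit _ l); rewrite /cl3 !inE /= ?xpair_eqE ?eqxx ?NE ?NE' //.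

Theorem mainTheorem8 (V : finType) (F : {set {set lit V}}) (u v w a b : V) :
  is_formula F -> irredundant F ->
  uniq [:: u; v; w] -> uniq [:: a; b; u; v; w] ->
  cl3 (a, true) (b, true) (u, true) \in F ->
  cl3 (a, true) (b, true) (v, true) \in F ->
  cl3 (a, true) (b, true) (w, true) \in F ->
  (cl3 (u, false) (v, false) (w, true) \notin F) /\
  (cl3 (u, false) (v, false) (w, false) \in F ->
   forall c : V, c \notin [:: u; v; w; a; b] ->
     cl3 (a, true) (b, true) (c, true) \notin F).
Proof.
move=> _ Hirr _ Hab Hu Hv Hw.
move: Hab; rewrite /= !inE !negb_or => /and5P[/and4P[ab au av aw] /and3P[bu bv bw] /andP[uv uw] vw _].
have NE := (negbTE ab, negbTE au, negbTE av, negbTE aw, negbTE bu, negbTE bv, negbTE bw, negbTE uv, negbTE uw, negbTE vw).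
have NE' := (nsym _ _ ab, nsym _ _ au, nsym _ _ av, nsym _ _ aw, nsym _ _ bu, nsym _ _ bv, nsym _ _ bw, nsym _ _ uv, nsym _ _ uw, nsym _ _ vw).
split.
- apply/negP => H.
  have [f [sf nf]] := Hirr _ Hw.
  move: sf; rewrite satE /= => /and3P[/eqP fa /eqP fb /eqP fw].
  have fu : f u = false.
    have n : cl3 (a, true) (b, true) (u, true) != cl3 (a, true) (b, true) (w, true) by ne (w, true) NE NE'.
    by have := nf _ Hu n; rewrite satE /= fa fb /=; case: (f u).
  have fv : f v = false.
    have n : cl3 (a, true) (b, true) (v, true) != cl3 (a, true) (b, true) (w, true) by ne (w, true) NE NE'.
    by have := nf _ Hv n; rewrite satE /= fa fb /=; case: (f v).
  have n : cl3 (u, false) (v, false) (w, true) != cl3 (a, true) (b, true) (w, true) by ne (a, true) NE NE'.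
  by have := nf _ H n; rewrite satE /= fu fv fw.
- move=> H c; rewrite !inE !negb_or => /and5P[cu cv cw ca cb]; apply/negP => Hc.
  have [f [sf nf]] := Hirr _ Hc.
  move: sf; rewrite satE /= => /and3P[/eqP fa /eqP fb /eqP fc].
  have fx : forall x, c != x -> x != a -> x != b -> cl3 (a, true) (b, true) (x, true) \in F -> f x = false.
    move=> x xc xa xb Hx.
    have n : cl3 (a, true) (b, true) (x, true) != cl3 (a, true) (b, true) (c, true).
      ne (c, true) NE NE'; [by rewrite !orbT | by rewrite !andbT (negbTE ca) (negbTE cb) (negbTE xc)].
    by have := nf _ Hx n; rewrite satE /= fa fb /=; case: (f x).
  have n : cl3 (u, false) (v, false) (w, false) != cl3 (a, true) (b, true) (c, true) by ne (a, true) NE NE'.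
  have := nf _ H n; rewrite satE /= (fx u) ?(fx v) ?(fx w) //; by rewrite eq_sym.
Qed.
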